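(* Consider a \textsc{Brick} payment channel between two parties $A$ and $B$ with a committee of $n=3f+1$ Wardens and threshold $t=2f+1$, as described in the context. Assume the network is asynchronous, at most one of the two channel parties is Byzantine (the other is honest), and at most $f$ of the Wardens are Byzantine (the remaining Wardens are honest). Then \textsc{Brick} achieves safety: the channel can only close in the freshest committed state.
   Context: Setting and model. Two channel parties $A,B$ and a committee of Wardens $W_1,\dots,W_n$ with $n=3f+1$ and threshold $t=2f+1$. All participants are computationally bounded; communication channels are authenticated and secure, the hash function $H$ is cryptographically secure (collision and pre-image resistant), and signatures are unforgeable. The underlying blockchain supports smart contracts and satisfies persistence (once a transaction is in the permanent part of one honest party's chain it is in every honest party's chain) and liveness (a transaction given to all honest parties for long enough is eventually included on-chain). The network is asynchronous: every message sent by an honest party is eventually delivered to every honest party, with no known delay bound. Honest participants follow the protocol; Byzantine ones deviate arbitrarily. Channel states carry sequence numbers $1,2,\dots$; $s_i$ denotes the state with sequence number $i$; $\sigma(\cdot)$ denotes the joint signature of both $A$ and $B$, $\sigma_{W_j}(\cdot)$ a signature of Warden $W_j$. Protocol \textsc{Brick}. Open: both parties sign $open(H(W_1),\dots,H(W_n),t,s_1,F)$ (committing Warden identities, threshold and a closing fee $F$), the initial state is announced via Update/Consistent Broadcast, the opening is published on-chain, and each Warden locks collateral in the smart contract. Update: for a new state $s_i$ the parties sign and exchange $\{H(s_i,r_i),i\}$ with a random $r_i$; after receiving the counterparty's signature on it, each party sends its signature on $i$, forming the announcement $\{M,\sigma(M)\}$ with $M=i$. Consistent Broadcast: each party sends the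 announcement (with a small fee) to all Wardens; a Warden checks that both parties' signatures are present and that the sequence number is exactly one higher than its stored one; if it has already published a closing announcement it ignores the update, otherwise it replaces its stored announcement, signs $M$ and returns $\sigma_{W_j}(M)$. A party considers the state committed once it holds at least $t$ Warden signatures on $M$, and only then proceeds. Optimistic Close: a party requests closing on state $s$; both parties sign $s$ and it is published on-chain. Pessimistic Close: a party sends $close()$ to all Wardens; each Warden publishes on-chain $\sigma_{W_j}(M,close)$ for its stored announcement $M$ and stops signing updates; once $t$ such closing announcements are on-chain the party takes the maximum sequence number $i$ among them and publishes $s_i$, $r_i$ and both parties' signatures on $\{H(s_i,r_i),i\}$; after inclusion in a permanent block the smart contract recomputes $H(s_i,r_i)$, verifies both parties' signatures on $\{H(s_i,r_i),i\}$, verifies that the $t$ announcements come from the Wardens committed at opening and that $i$ is their maximum sequence number, and then closes the channel in $s_i$. Definitions. A state $s_i$ is valid if both parties have signed it, it is the freshest (no subsequent state $s_{i+1}$ is valid), and the committee has not invalidated it (the committee invalidates $s_i$ if the channel closes in $s_{i-1}$). A state is committed if it was signed by at least $2f+1$ Wardens, or it is valid and included in a block in the persistent part of the blockchain. A channel is closed when its locked funds are spent on-chain. Safety: the channel will only close in the freshest committed state. *)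

(* Defs.v *)
From HB Require Import structures.
From mathcomp Require Import all_boot.

Set Implicit Arguments.
Unset Strict Implicit.
Unset Printing Implicit Defensive.

Definition n_wardens (f : nat) : nat := 3 * f + 1.
Definition threshold (f : nat) : nat := 2 * f + 1.
Notation warden f := 'I_(n_wardens f).

Notation party := bool (only parsing).
Definition partyA : party := false.
Definition partyB : party := true.

(* A (finite) execution is the sequence of all
   actions taken so far, in the (arbitrary, asynchronous) order in which
   they happened; on-chain actions appear in the order of the chain.
   State s_i is identified by its sequence number i (the hash H(s_i,r_i)
   signed by both parties binds the content to i).                      *)
Inductive event (f : nat) : Type :=
  (* party p signs {H(s_i,r_i), i} and M = i (update / announcement)   *)
  | PSign of party & nat
  | OptSign of party & nat
  | WSign of warden f & nat
  (* Warden w publishes on-chain the closing announcement sigma_w(i,close) *)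
  | WClose of warden f & nat
  (* pessimistic close on-chain in s_i, justified by the listed closing
     announcements (warden, sequence number)                            *)
  | ChainClose of nat & seq (warden f * nat)
  | OptClose of nat.

Arguments PSign {f}.
Arguments OptSign {f}.
Arguments WSign {f}.
Arguments WClose {f}.
Arguments ChainClose {f}.
Arguments OptClose {f}.

Definition event_code (f : nat) : Type :=
  (nat * bool * warden f * nat * seq (warden f * nat))%type.

Definition encode_event f (w0 : warden f) (e : event f) : event_code f :=
  match e with
  | PSign p i => (0, p, w0, i, [::])
  | OptSign p i => (1, p, w0, i, [::])
  | WSign w i => (2, false, w, i, [::])
  | WClose w i => (3, false, w, i, [::])
  | ChainClose i s => (4, false, w0, i, s)
  | OptClose i => (5, false, w0, i, [::])
  end.

Definition decode_event f (c : event_code f) : option (event f) :=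
  let: (k, p, w, i, s) := c in
  match k with
  | 0 => Some (PSign p i)
  | 1 => Some (OptSign p i)
  | 2 => Some (WSign w i)
  | 3 => Some (WClose w i)
  | 4 => Some (ChainClose i s)
  | 5 => Some (OptClose i)
  | _ => None
  end.

Lemma w0_of f : warden f.
Proof. by apply: (@Ordinal _ 0); rewrite /n_wardens addn1. Qed.

Lemma encode_eventK f : pcancel (@encode_event f (w0_of f)) (@decode_event f).
Proof. by case. Qed.

HB.instance Definition _ f :=
  Equality.copy (event f) (pcan_type (@encode_eventK f)).

Section Derived.
Variable f : nat.
Implicit Types (tr : seq (event f)) (i : nat) (p : party) (w : warden f).

Definition sigcount tr i : nat := #|[set w : warden f | WSign w i \in tr]|.

Definition annsigned tr i : bool := (PSign false i \in tr) && (PSign true i \in tr).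

Definition bothsigned tr i : bool :=
  [forall p : bool, (PSign p i \in tr) || (OptSign p i \in tr)].

(* the announcement currently stored by Warden w: the last one it signed
   (0 = nothing stored yet) *)
Definition stored tr w : nat :=
  foldl (fun acc e => if e is WSign w' j then (if w' == w then j else acc) else acc) 0 tr.

Definition wclosed tr w : bool :=
  has (fun e => if e is WClose w' _ then w' == w else false) tr.

Definition optsigned tr p : bool :=
  has (fun e => if e is OptSign q _ then q == p else false) tr.

Definition closed tr : bool :=
  has (fun e => match e with ChainClose _ _ | OptClose _ => true | _ => false end) tr.

Definition closed_in tr i : bool :=
  has (fun e => match e with
                | ChainClose j _ => j == i
                | OptClose j => j == i
                | _ => false end) tr.

Definition ev_idx (e : event f) : nat :=
  match e with
  | PSign _ i | OptSign _ i | WSign _ i | WClose _ i | OptClose i => i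
  | ChainClose i s => maxn i (foldr maxn 0 (map snd s))
  end.
Definition maxidx tr : nat := foldr maxn 0 (map ev_idx tr).

(* Validity, literally as in the paper:
     s_i is valid iff both parties signed it, the committee has not
     invalidated it (the channel did not close in s_(i-1)), and the next
     state s_(i+1) is not valid.
   The recursion goes upwards; it is computed with fuel, which is enough
   since no state beyond [maxidx tr] is signed by both parties. *)
Fixpoint valid_aux tr (fuel : nat) i : bool :=
  match fuel with
  | 0 => false
  | fuel'.+1 =>
      [&& bothsigned tr i, ~~ ((0 < i) && closed_in tr i.-1)
        & ~~ valid_aux tr fuel' i.+1]
  end.
Definition valid tr i : bool := valid_aux tr (maxidx tr).+1 i.

(* s_i is committed: signed by at least 2f+1 Wardens, or valid and
   included on-chain (the state is put on-chain exactly when the channel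
   closes in it). *)
Definition committed tr i : bool :=
  (threshold f <= sigcount tr i) || (valid tr i && closed_in tr i).

Definition freshest_committed tr i : Prop :=
  committed tr i /\ forall j, committed tr j -> j <= i.

(* Which actions may happen next, after execution [tr].
   [BW] is the set of Byzantine Wardens; [byzP = Some p] means party p is
   Byzantine, [byzP = None] means both parties are honest.  Byzantine
   participants may perform any action (they can only not forge
   signatures of honest participants, which is reflected by the fact that
   every signature event is an action of its signer).  On-chain closing is
   enforced by the smart contract for everybody.                         *)
Variables (BW : {set warden f}) (byzP : option party).

Definition byz_party p : bool := byzP == Some p.

Definition allowed tr (e : event f) : bool :=
  match e with
  | PSign p i =>
      byz_party p ||
      [&& (i == 1) || (threshold f <= sigcount tr i.-1),   (* s_(i-1) committed *)
          PSign p i \notin tr & ~~ optsigned tr p]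
  | OptSign p i =>
      byz_party p ||
      ((PSign p i \in tr) &&          (* i is the freshest state p signed *)
       all (fun e' => if e' is PSign q j then (q != p) || (j <= i) else true) tr)
  | WSign w i =>
      (w \in BW) ||
      [&& annsigned tr i, i == (stored tr w).+1 & ~~ wclosed tr w]
  | WClose w i =>
      (w \in BW) || ((i == stored tr w) && ~~ wclosed tr w)
  | ChainClose i anns =>
      [&& ~~ closed tr,
          threshold f <= size anns,
          uniq (map fst anns),
          all (fun a => WClose a.1 a.2 \in tr) anns,
          i == foldr maxn 0 (map snd anns)
        & annsigned tr i]
  | OptClose i =>
      [&& ~~ closed tr, OptSign false i \in tr & OptSign true i \in tr]
  end.

Inductive reachable : seq (event f) -> Prop :=
  | reach_nil : reachable [::]
  | reach_step tr e : reachable tr -> allowed tr e -> reachable (rcons tr e).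

End Derived.

(* Main.v *)
From Pilot Require Import Defs.
From mathcomp Require Import all_boot zify.

Set Implicit Arguments. Unset Strict Implicit. Unset Printing Implicit Defensive.

Notation dclosed := Pilot.Defs.closed.

Section Proofs.
Variables (f : nat) (BW : {set warden f}) (byzP : option bool).
Implicit Types (tr : seq (event f)).

Definition hp : bool := if byzP is Some p then ~~ p else false.
Lemma hp_honest : byz_party byzP hp = false.
Proof. by rewrite /byz_party /hp; case: byzP => [[]|]. Qed.

Lemma stored_rcons tr e w : stored (rcons tr e) w =
  (if e is WSign w' j then (if w' == w then j else stored tr w) else stored tr w).
Proof. by rewrite /stored foldl_rcons; case: e. Qed.

Lemma mem_rconsE (x e : event f) tr : x \in rcons tr e -> x = e \/ x \in tr.
Proof. by rewrite mem_rcons in_cons => /orP [/eqP|]; auto. Qed.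
Lemma mem_rconsL (x e : event f) tr : x \in tr -> x \in rcons tr e.
Proof. by rewrite mem_rcons in_cons => ->; rewrite orbT. Qed.
Lemma mem_rconsR (e : event f) tr : e \in rcons tr e.
Proof. by rewrite mem_rcons mem_head. Qed.

Lemma wclosedI tr w k : WClose w k \in tr -> wclosed tr w.
Proof. by move=> H; apply/hasP; exists (WClose w k) => //=. Qed.
Lemma optsignedI tr p k : OptSign p k \in tr -> optsigned tr p.
Proof. by move=> H; apply/hasP; exists (OptSign p k) => //=. Qed.

Lemma annM tr e j : annsigned tr j -> annsigned (rcons tr e) j.
Proof. by rewrite /annsigned => /andP[??]; rewrite !mem_rconsL. Qed.

Lemma sigM tr e j : sigcount tr j <= sigcount (rcons tr e) j.
Proof.
apply: subset_leq_card; apply/subsetP => w; rewrite !inE; exact: mem_rconsL.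
Qed.

Lemma invW tr w : reachable BW byzP tr -> w \notin BW ->
  (forall j, WSign w j \in tr -> (j <= stored tr w) && annsigned tr j) /\
  (forall k, WClose w k \in tr -> k = stored tr w).
Proof.
move=> R hw; elim: R => [|t e R [IH1 IH2] A]; first by split.
rewrite stored_rcons.
case: e A => [p i|p i|w' i|w' i|i s|i] /= A.
- split=> j /mem_rconsE [] // H; first by case/andP: (IH1 _ H) => -> /annM ->.
  exact: IH2.
- split=> j /mem_rconsE [] // H; first by case/andP: (IH1 _ H) => -> /annM ->.
  exact: IH2.
- case: (eqVneq w' w) => [E|E].
  + subst w'; rewrite (negbTE hw) /= in A; case/and3P: A => Ha /eqP Hi Hc.
    split=> j /mem_rconsE [].
    * by case=> ->; rewrite leqnn annM.
    * by move=> H; case/andP: (IH1 _ H) => H1 /annM ->; rewrite andbT; lia.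
    * by [].
    * by move=> H; rewrite (wclosedI H) in Hc.
  + split=> j /mem_rconsE [].
    * by case=> E'; rewrite E' eqxx in E.
    * by move=> H; case/andP: (IH1 _ H) => -> /annM ->.
    * by [].
    * exact: IH2.
- case: (eqVneq w' w) => [E|E].
  + subst w'; rewrite (negbTE hw) /= in A; case/andP: A => /eqP Hi Hc.
    split=> j /mem_rconsE [].
    * by [].
    * by move=> H; case/andP: (IH1 _ H) => -> /annM ->.
    * by case=> ->.
    * exact: IH2.
  + split=> j /mem_rconsE [].
    * by [].
    * by move=> H; case/andP: (IH1 _ H) => -> /annM ->.
    * by case=> E'; rewrite E' eqxx in E.
    * exact: IH2.
- split=> j /mem_rconsE [] // H; first by case/andP: (IH1 _ H) => -> /annM ->.
  exact: IH2.
- split=> j /mem_rconsE [] // H; first by case/andP: (IH1 _ H) => -> /annM ->.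
  exact: IH2.
Qed.

Lemma invP tr : reachable BW byzP tr ->
  (forall k, OptSign hp k \in tr ->
     PSign hp k \in tr /\ forall j, PSign hp j \in tr -> j <= k) /\
  (forall k, PSign hp k \in tr -> (k == 1) || (threshold f <= sigcount tr k.-1)).
Proof.
elim => [|t e R [IH1 IH2] A]; first by split.
have sg k : (k == 1) || (threshold f <= sigcount t k.-1) ->
            (k == 1) || (threshold f <= sigcount (rcons t e) k.-1).
  by case/orP=> [->//|H]; rewrite (leq_trans H (sigM _ _ _)) orbT.
move: sg; case: e A => [p i|p i|w' i|w' i|i s|i] /= A sg.
- case: (eqVneq p hp) => [E|E].
  + subst p; rewrite hp_honest /= in A; case/and3P: A => Hs Hn Ho.
    split=> k /mem_rconsE [] //.
    * by move=> H; rewrite (optsignedI H) in Ho.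
    * by case=> ->; apply: sg.
    * by move=> H; apply: sg; apply: IH2.
  + split=> k /mem_rconsE [] //.
    * move=> H; case: (IH1 _ H) => H1 H2; split; first exact: mem_rconsL.
      by move=> j /mem_rconsE [[E']|]; [rewrite E' eqxx in E|apply: H2].
    * by case=> E'; rewrite E' eqxx in E.
    * by move=> H; apply: sg; apply: IH2.
- case: (eqVneq p hp) => [E|E].
  + subst p; rewrite hp_honest /= in A; case/andP: A => Hs /allP Ha.
    split=> k /mem_rconsE [] //.
    * case=> ->; split; first exact: mem_rconsL.
      move=> j /mem_rconsE [//|H]; have := Ha _ H; by rewrite eqxx.
    * move=> H; case: (IH1 _ H) => H1 H2; split; first exact: mem_rconsL.
      by move=> j /mem_rconsE [//|]; apply: H2.
    * by move=> H; apply: sg; apply: IH2.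
  + split=> k /mem_rconsE [] //.
    * by case=> E'; rewrite E' eqxx in E.
    * move=> H; case: (IH1 _ H) => H1 H2; split; first exact: mem_rconsL.
      by move=> j /mem_rconsE [//|]; apply: H2.
    * by move=> H; apply: sg; apply: IH2.
all: split=> k /mem_rconsE [] //;
  [ move=> H; case: (IH1 _ H) => H1 H2; split; first exact: mem_rconsL;
    by move=> j /mem_rconsE [//|]; apply: H2
  | by move=> H; apply: sg; apply: IH2 ].
Qed.

Definition is_close (e : event f) : bool :=
  match e with ChainClose _ _ | OptClose _ => true | _ => false end.

Lemma decomp tr : reachable BW byzP tr -> dclosed tr ->
  exists tr1 e tr2, [/\ tr = tr1 ++ e :: tr2, allowed BW byzP tr1 e, is_close e,
                        ~~ dclosed tr1 & ~~ dclosed tr2].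
Proof.
elim => [//|t e R IH A]; rewrite /dclosed /Defs.closed has_rcons => /orP [He|Hc].
- case Ht: (dclosed t).
  + have : is_close e by [].
    by case: e A He => [p k|p k|w k|w k|k s|k] //= A _; rewrite Ht in A.
  + exists t, e, [::]; split => //; first by rewrite cats1.
    all: try by rewrite Ht.
    exact: (negbT Ht).
- case: (IH Hc) => t1 [e1 [t2 [Et A1 C1 N1 N2]]].
  exists t1, e1, (rcons t2 e); split => //; first by rewrite Et rcons_cat.
  rewrite /dclosed /Defs.closed has_rcons negb_or N2 andbT.
  by case: e A => [p k|p k|w k|w k|k s|k] //= A; move: A; rewrite /dclosed /Defs.closed Hc.
Qed.

Lemma closed_in_closed tr j : closed_in tr j -> dclosed tr.
Proof. by case/hasP => x Hx Px; apply/hasP; exists x => //; case: x {Hx} Px. Qed.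

Lemma va_bs tr m k : valid_aux tr m k -> bothsigned tr k.
Proof. by case: m => //= m /and3P []. Qed.

Lemma in_foldr_maxn (x : nat) s : x \in s -> x <= foldr maxn 0 s.
Proof. elim: s => //= y s IH; rewrite in_cons => /orP [/eqP->|/IH H]; lia. Qed.

End Proofs.

Theorem theorem1 (f : nat) (BW : {set warden f}) (byzP : option bool)
    (tr : seq (event f)) :
  #|BW| <= f ->
  reachable BW byzP tr ->
  forall i : nat, closed_in tr i -> freshest_committed tr i.
Proof.
move=> Hbw R i Hi.
have [IP1 IP2] := invP R.
have honest_signer j : threshold f <= sigcount tr j ->
    exists w, w \notin BW /\ WSign w j \in tr.
  move=> H; have : ~~ ([set w | WSign w j \in tr] \subset BW).
    apply/negP => /subset_leq_card Hle; have := leq_trans H Hle; rewrite /threshold; move=> HH; have HH2 := leq_trans HH Hbw; clear -HH2; lia.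
  by case/subsetPn => w; rewrite inE => ??; exists w.
have ann_hp j : annsigned tr j -> PSign (hp byzP) j \in tr.
  by rewrite /annsigned; case/andP; case: (hp byzP).
have bs_hp k : bothsigned tr k ->
    (PSign (hp byzP) k \in tr) || (OptSign (hp byzP) k \in tr).
  by move=> /forallP H; exact: (H (hp byzP)).
have ps_hp k : bothsigned tr k -> PSign (hp byzP) k \in tr.
  by move/bs_hp/orP => [//|/IP1 []].
case: (decomp R (closed_in_closed Hi)) => tr1 [e [tr2 [Etr A Ce C1 C2]]].
have inL x : x \in tr1 -> x \in tr by rewrite Etr mem_cat => ->.
have uniqc k : closed_in tr k -> k = (match e with ChainClose j _ => j | OptClose j => j | _ => 0 end).
  rewrite Etr /closed_in has_cat /= => /orP [/closed_in_closed H|/orP [H|/closed_in_closed H]].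
  - by rewrite H in C1.
  - by case: e {A Ce Etr inL} H => [p k'|p k'|w k'|w k'|k' s|k'] //= H; apply/eqP; rewrite eq_sym.
  - by rewrite H in C2.
have ei := uniqc _ Hi.
case: e A Ce Etr inL uniqc ei => // [j anns|j] A _ Etr inL uniqc ei; subst j.
- case/and5P: A => _ Hsz Hu /allP Hall /andP [/eqP Hmax Hann].
  have Hann' : annsigned tr i by case/andP: Hann => ??; rewrite /annsigned !inL.
  split.
  + case: (leqP (threshold f) (sigcount tr i)) => Hs; first by rewrite /committed Hs.
    have ipos : 0 < i.
      case/orP: (IP2 _ (ann_hp _ Hann')) => [/eqP->//|H].
      rewrite lt0n; apply/negP => /eqP i0; rewrite i0 /= in H Hs; lia.
    rewrite /committed; apply/orP; right; rewrite Hi andbT /valid /=.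
    apply/and3P; split.
    * by case/andP: Hann' => ??; apply/forallP => -[]; apply/orP; left.
    * apply/negP => /andP [_ /uniqc]; lia.
    * apply/negP => /va_bs /ps_hp /IP2 /orP [] /=; lia.
  + move=> k /orP [Hk | /andP [_ /uniqc ->] //].
    set S := [set w | WSign w k \in tr]; set Aw := [set w | w \in map fst anns].
    have cA : #|Aw| = size anns by rewrite cardsE (card_uniqP Hu) size_map.
    have cU := cardsUI S Aw.
    have mU := max_card (S :|: Aw); rewrite card_ord in mU.
    have : ~~ (S :&: Aw \subset BW).
      apply/negP => /subset_leq_card Hle.
      have Hle' := leq_trans Hle Hbw.
      have Hk' : threshold f <= #|S| := Hk.
      have mU' : #|S :|: Aw| <= 3 * f + 1 := mU.
      rewrite /threshold in Hk' Hsz.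
      clear -Hle' Hk' Hsz mU' cU cA; lia.
    case/subsetPn => w; rewrite !inE => /andP [Hw Hwa] hw.
    case/mapP: Hwa => a Ha Ew.
    have Wa := Hall a Ha.
    have [W1 W2] := invW R hw.
    have E2 := W2 a.2 ltac:(by rewrite Ew; apply: inL).
    case/andP: (W1 _ Hw) => Hle _.
    have := in_foldr_maxn (map_f snd Ha); rewrite -Hmax; lia.
- case/and3P: A => _ O1 O2.
  have Ohp : OptSign (hp byzP) i \in tr by case: (hp byzP); apply: inL.
  have [HPj Hmax] := IP1 _ Ohp.
  split.
  + apply/orP; right; rewrite Hi andbT /valid /=; apply/and3P; split.
    * by apply/forallP => -[]; apply/orP; right; apply: inL.
    * apply/negP => /andP [Hp /uniqc]; lia.
    * apply/negP => /va_bs /ps_hp /Hmax; lia.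
  + move=> k /orP [/honest_signer [w [hw Hw]] | /andP [_ /uniqc ->] //].
    have [W1 _] := invW R hw.
    by case/andP: (W1 _ Hw) => _ /ann_hp /Hmax.
Qed.
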